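(* Suppose that for every integer $n \geq 3$ and every convex polygon $P \subset \mathbb{R}^2$ with $n$ vertices, the slack matrix $S_P$ satisfies $\operatorname{rank}_+(S_P) \leq \left\lfloor \frac{n+6}{2} \right\rfloor$. Then every nonnegative matrix $X \in \mathbb{R}^{m \times n}_+$ with $\operatorname{rank}(X) = 3$ satisfies \[ \operatorname{rank}_+(X) \; \leq \; \left\lfloor \frac{\min(m,n)+6}{2} \right\rfloor . \]
   Context: For a nonnegative matrix $X \in \mathbb{R}^{m\times n}_+$, the nonnegative rank $\operatorname{rank}_+(X)$ is the smallest integer $r$ such that there exist $W \in \mathbb{R}^{m\times r}_+$ and $H \in \mathbb{R}^{r\times n}_+$ with $X = WH$. The slack matrix of a polytope $P = \{x \in \mathbb{R}^k : A(i,:)x \leq b_i,\ 1\le i\le m\}$ (facet description with $m$ facets) with vertices $v_1,\dots,v_n$ is the $m\times n$ nonnegative matrix with entries $b_i - A(i,:)v_j$ (the slack of vertex $j$ with respect to facet $i$). $\lfloor x \rfloor$ denotes the largest integer not exceeding $x$. *)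

(* Defs.v *)
From HB Require Import structures.
From mathcomp Require Import all_boot all_order all_algebra.
From mathcomp Require Import boolp reals.
Set Implicit Arguments. Unset Strict Implicit. Unset Printing Implicit Defensive.
Import Order.TTheory GRing.Theory Num.Theory.
Local Open Scope ring_scope.

Section Defs.
Variable R : realType.

Definition nonneg_mx (m n : nat) (X : 'M[R]_(m, n)) : Prop :=
  forall i j, 0 <= X i j.

Definition nonneg_fact (m n : nat) (X : 'M[R]_(m, n)) (r : nat) : Prop :=
  exists (W : 'M[R]_(m, r)) (H : 'M[R]_(r, n)),
    [/\ nonneg_mx W, nonneg_mx H & X = W *m H].

(* nonnegative rank: the least r admitting a nonnegative factorization
   (set to 0, arbitrarily, if no such r exists, i.e. X is not nonnegative) *)
Definition nonneg_rank (m n : nat) (X : 'M[R]_(m, n)) : nat :=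
  match pselect (exists r, nonneg_fact X r) with
  | left ex =>
      let ex' : exists r, `[< nonneg_fact X r >] :=
        let: ex_intro r h := ex in ex_intro _ r (asboolT h) in
      ex_minn ex'
  | right _ => 0%N
  end.

Definition in_conv_of (n : nat) (v : 'I_n -> 'cV[R]_2) (P : pred 'I_n)
    (x : 'cV[R]_2) : Prop :=
  exists lam : 'I_n -> R,
    [/\ forall j, 0 <= lam j, forall j, ~~ P j -> lam j = 0,
        \sum_j lam j = 1 & x = \sum_j lam j *: v j].

(* P = conv(v_1..v_n) is a convex polygon whose vertices are exactly the
   (pairwise distinct) points v_1, ..., v_n: each v_j is an extreme point,
   i.e. not a convex combination of the other v_k. *)
Definition convex_polygon_vertices (n : nat) (v : 'I_n -> 'cV[R]_2) : Prop :=
  (3 <= n)%N /\ forall j, ~ in_conv_of v (fun k => k != j) (v j).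

Definition tight_set (m n : nat) (A : 'M[R]_(m, 2)) (b : 'cV[R]_m)
    (v : 'I_n -> 'cV[R]_2) (i : 'I_m) : {set 'I_n} :=
  [set j | (A *m v j) i 0 == b i 0].

(* (A, b) is a facet description of P = conv(v): P = {x | A x <= b},
   every inequality defines a facet (an edge, i.e. a face containing exactly
   two vertices of the polygon), and distinct inequalities define distinct
   facets. *)
Definition facet_description (m n : nat) (A : 'M[R]_(m, 2)) (b : 'cV[R]_m)
    (v : 'I_n -> 'cV[R]_2) : Prop :=
  [/\ forall x : 'cV[R]_2,
        in_conv_of v predT x <-> (forall i, (A *m x) i 0 <= b i 0),
      forall i, #|tight_set A b v i| = 2%N
    & forall i i', tight_set A b v i = tight_set A b v i' -> i = i'].

Definition slack_matrix (m n : nat) (A : 'M[R]_(m, 2)) (b : 'cV[R]_m)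
    (v : 'I_n -> 'cV[R]_2) : 'M[R]_(m, n) :=
  \matrix_(i < m, j < n) (b i 0 - (A *m v j) i 0).

End Defs.

(* Main.v *)
From HB Require Import structures.
From mathcomp Require Import all_boot all_order all_algebra.
From mathcomp Require Import boolp reals.
Require Import Defs.
From mathcomp Require Import fingroup perm.
From mathcomp Require Import ring lra zify.
Set Implicit Arguments. Unset Strict Implicit. Unset Printing Implicit Defensive.
Import Order.TTheory GRing.Theory Num.Theory.
Local Open Scope ring_scope.

Ltac fld := field; repeat (match goal with |- is_true (_ && _) => apply/andP; split end); try assumption.

Section Geo.
Variable R : realType.
Implicit Types a b c p q r x u w y : R * R.

Definition cross u w := u.1 * w.2 - u.2 * w.1.
Definition orient a b c := (b.1 - a.1) * (c.2 - a.2) - (b.2 - a.2) * (c.1 - a.1).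

Lemma orient_rot a b c : orient a b c = orient b c a.
Proof. rewrite /orient; ring. Qed.
Lemma orient_swap a b c : orient a b c = - orient a c b.
Proof. rewrite /orient; ring. Qed.

Lemma bary p q r x : orient p q r != 0 ->
  let D := orient p q r in
  [/\ orient q r x / D + orient r p x / D + orient p q x / D = 1,
      x.1 = orient q r x / D * p.1 + orient r p x / D * q.1 + orient p q x / D * r.1 &
      x.2 = orient q r x / D * p.2 + orient r p x / D * q.2 + orient p q x / D * r.2].
Proof.
move: p q r x => [p1 p2] [q1 q2] [r1 r2] [x1 x2] /= hD; rewrite /orient /= in hD *.
split; field; exact: hD.
Qed.

Definition convR n (z : 'I_n -> R * R) (P : pred 'I_n) (x : R * R) :=
  exists lam : 'I_n -> R, [/\ forall j, 0 <= lam j, forall j, ~~ P j -> lam j = 0,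
     \sum_j lam j = 1, x.1 = \sum_j lam j * (z j).1 & x.2 = \sum_j lam j * (z j).2].

Definition cpos n (z : 'I_n -> R * R) := forall j, ~ convR z (fun k => k != j) (z j).

Lemma sum_ind n (p : 'I_n) (F : 'I_n -> R) : \sum_j (j == p)%:R * F j = F p.
Proof.
rewrite (bigD1 p) //= eqxx mul1r big1 ?addr0 // => j /negbTE ->; by rewrite mul0r.
Qed.

Lemma sum3 n (F : 'I_n -> R) (c1 c2 c3 : R) (q p : 'I_n) :
  \sum_i (c1 * (i == q)%:R + c2 * (i == p)%:R + c3) * F i =
  c1 * F q + c2 * F p + c3 * \sum_i F i.
Proof.
under eq_bigr => i _ do rewrite !mulrDl.
rewrite !big_split /=.
under eq_bigr => i _ do rewrite -mulrA.
under [X in _ + X + _ = _]eq_bigr => i _ do rewrite -mulrA.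
by rewrite -!big_distrr /= !sum_ind.
Qed.

Lemma conv3 n (z : 'I_n -> R * R) (P : pred 'I_n) (p q r : 'I_n) (A B C : R) x :
  P p -> P q -> P r -> 0 <= A -> 0 <= B -> 0 <= C -> A + B + C = 1 ->
  x.1 = A * (z p).1 + B * (z q).1 + C * (z r).1 ->
  x.2 = A * (z p).2 + B * (z q).2 + C * (z r).2 -> convR z P x.
Proof.
move=> Pp Pq Pr hA hB hC hs h1 h2.
exists (fun j => A * (j == p)%:R + B * (j == q)%:R + C * (j == r)%:R); split.
- move=> j; rewrite !addr_ge0 ?mulr_ge0 //.
- move=> j Pj.
  have -> : (j == p) = false by apply/eqP => e; move: Pj; rewrite e Pp.
  have -> : (j == q) = false by apply/eqP => e; move: Pj; rewrite e Pq.
  have -> : (j == r) = false by apply/eqP => e; move: Pj; rewrite e Pr.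
  by rewrite !mulr0 !addr0.
- rewrite !big_split /= -!big_distrr /=.
  have e : forall s : 'I_n, \sum_(j < n) (j == s)%:R = 1 :> R.
    by move=> s; rewrite (bigD1 s) //= eqxx big1 ?addr0 // => j /negbTE ->.
  by rewrite !e !mulr1.
- rewrite h1; under eq_bigr => j _ do rewrite !mulrDl.
  rewrite !big_split /=.
  under [X in _ = X + _ + _]eq_bigr => j _ do rewrite (mulrC A) -mulrA.
  under [X in _ = _ + X + _]eq_bigr => j _ do rewrite (mulrC B) -mulrA.
  under [X in _ = _ + _ + X]eq_bigr => j _ do rewrite (mulrC C) -mulrA.
  by rewrite !sum_ind.
- rewrite h2; under eq_bigr => j _ do rewrite !mulrDl.
  rewrite !big_split /=.
  under [X in _ = X + _ + _]eq_bigr => j _ do rewrite (mulrC A) -mulrA.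
  under [X in _ = _ + X + _]eq_bigr => j _ do rewrite (mulrC B) -mulrA.
  under [X in _ = _ + _ + X]eq_bigr => j _ do rewrite (mulrC C) -mulrA.
  by rewrite !sum_ind.
Qed.


Definition inH u := (0 < u.1) || ((u.1 == 0) && (0 < u.2)).
Definition subp a b : R * R := (a.1 - b.1, a.2 - b.2).

Lemma orient_cross o a b : orient o a b = cross (subp a o) (subp b o).
Proof. by rewrite /orient /cross /=. Qed.

Lemma pair_eq p q : p.1 = q.1 -> p.2 = q.2 -> p = q.
Proof. by case: p q => [? ?] [? ?] /= -> ->. Qed.

Lemma trans_H u w y : inH u -> inH w -> inH y ->
  0 < cross u w -> 0 < cross w y -> 0 < cross u y.
Proof.
move=> hu hw hy h1 h2; rewrite ltNge; apply/negP => h3.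
have i1 : cross u w * y.1 + cross w y * u.1 - cross u y * w.1 = 0 by rewrite /cross; ring.
have i2 : cross u w * y.2 + cross w y * u.2 - cross u y * w.2 = 0 by rewrite /cross; ring.
move: i1 i2 h1 h2 h3; move: (cross u w) (cross w y) (cross u y) => al be ga.
move: hu hw hy; rewrite /inH.
case/orP=> [hu|/andP[/eqP hu1 hu2]]; case/orP=> [hw|/andP[/eqP hw1 hw2]];
  case/orP=> [hy|/andP[/eqP hy1 hy2]]; move=> e1 e2 ha hb hg.
- have : 0 < al * y.1 by rewrite mulr_gt0. have : 0 <= be * u.1 by rewrite mulr_ge0 // ltW. have : 0 <= - ga * w.1 by rewrite mulr_ge0 // ?oppr_ge0 // ltW. lra.
- have : 0 < be * u.1 by rewrite mulr_gt0. have : 0 <= - ga * w.1 by rewrite mulr_ge0 // ?oppr_ge0 // ltW. rewrite hy1 in e1. lra.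
- have : 0 < al * y.1 by rewrite mulr_gt0. have : 0 <= be * u.1 by rewrite mulr_ge0 // ltW. rewrite hw1 in e1. lra.
- have : 0 < be * u.1 by rewrite mulr_gt0. rewrite hy1 hw1 in e1. lra.
- have : 0 < al * y.1 by rewrite mulr_gt0. have : 0 <= - ga * w.1 by rewrite mulr_ge0 // ?oppr_ge0 // ltW. rewrite hu1 in e1. lra.
- have : 0 < al * y.2 by rewrite mulr_gt0. have : 0 < be * u.2 by rewrite mulr_gt0.
  have : 0 <= - ga * w.1 by rewrite mulr_ge0 // ?oppr_ge0 // ltW.
  rewrite hu1 hy1 in e1.
  have : ga * w.1 = 0 by lra.
  move/eqP; rewrite mulf_eq0 => /orP[/eqP g0|/eqP w0]; first by rewrite g0 in e2; lra.
  move: hw; rewrite w0 ltxx //.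
- have : 0 < al * y.1 by rewrite mulr_gt0. rewrite hu1 hw1 in e1. lra.
- have : 0 < al * y.2 by rewrite mulr_gt0. have : 0 < be * u.2 by rewrite mulr_gt0.
  have : 0 <= - ga * w.2 by rewrite mulr_ge0 // ?oppr_ge0 // ltW. lra.
Qed.

Lemma collin u w : inH u -> inH w -> cross u w = 0 ->
  exists t, [/\ 0 < t, t <= 1 &
     ((w.1 = t * u.1 /\ w.2 = t * u.2) \/ (u.1 = t * w.1 /\ u.2 = t * w.2))].
Proof.
rewrite /inH /cross; case: u w => [u1 u2] [w1 w2] /=.
case/orP=> [hu|/andP[/eqP hu1 hu2]]; case/orP=> [hw|/andP[/eqP hw1 hw2]] hc.
- have hu0 : u1 != 0 by rewrite gt_eqF.
  have hw0 : w1 != 0 by rewrite gt_eqF.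
  have e2 : w2 = w1 * u2 / u1.
    have -> : w2 = (u1 * w2) / u1 by fld.
    have -> : u1 * w2 = u2 * w1 by lra.
    by rewrite (mulrC w1).
  case: (lerP w1 u1) => hwu.
  + exists (w1 / u1); split.
    * by rewrite divr_gt0.
    * by rewrite ler_pdivrMr // mul1r.
    * by left; split; rewrite ?e2; fld.
  + exists (u1 / w1); split.
    * by rewrite divr_gt0.
    * by rewrite ler_pdivrMr ?mul1r ?ltW // (lt_trans hu).
    * right; split; first by fld.
      by rewrite e2; fld.
- exfalso; rewrite hw1 mulr0 subr0 in hc; have : 0 < u1 * w2 by rewrite mulr_gt0. lra.
- exfalso; rewrite hu1 mul0r sub0r in hc; have : 0 < u2 * w1 by rewrite mulr_gt0. lra.
- have hu0 : u2 != 0 by rewrite gt_eqF.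
  have hw0 : w2 != 0 by rewrite gt_eqF.
  case: (lerP w2 u2) => hwu.
  + exists (w2 / u2); split.
    * by rewrite divr_gt0.
    * by rewrite ler_pdivrMr // mul1r.
    * by left; rewrite hu1 hw1 mulr0; split => //; fld.
  + exists (u2 / w2); split.
    * by rewrite divr_gt0.
    * by rewrite ler_pdivrMr ?mul1r ?ltW.
    * by right; rewrite hu1 hw1 mulr0; split => //; fld.
Qed.

Lemma cpos_inj n (z : 'I_n -> R * R) : cpos z -> injective z.
Proof.
move=> hc a b e; apply/eqP; apply: contraT => hab; exfalso; apply: (hc a).
have hba : b != a by rewrite eq_sym.
by apply: (@conv3 _ _ _ b b b 1 0 0); rewrite ?ler01 ?lexx ?addr0 // e !mul0r !addr0 mul1r.
Qed.

Lemma exmin (I : finType) (i0 : I) (P : pred I) (F : I -> R) :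
  P i0 -> exists2 j, P j & forall a : I, P a -> F j <= F a.
Proof. by move=> h; case: (arg_minP F h) => j Pj hj; exists j. Qed.

Lemma lexmin n (z : 'I_n.+1 -> R * R) : exists j0, forall a : 'I_n.+1,
  ((z j0).1 < (z a).1) || (((z j0).1 == (z a).1) && ((z j0).2 <= (z a).2)).
Proof.
case: (@exmin _ ord0 predT (fun i => (z i).1)) => // j1 _ h1.
case: (@exmin _ j1 (fun i => (z i).1 == (z j1).1) (fun i => (z i).2)) => // j0 /eqP P0 h0.
exists j0 => a; rewrite P0; case: (ltrgtP (z j1).1 (z a).1) => //.
  by move=> h; move: (h1 a isT); rewrite leNgt h.
by move=> e /=; rewrite h0 // e.
Qed.


End Geo.
Section Geo2.
Variable R : realType.

Lemma cyclic_order n (z : 'I_n -> R * R) : cpos z ->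
  exists s : {perm 'I_n}, forall i j l : 'I_n, (i < j)%N -> (j < l)%N ->
    0 < orient (z (s i)) (z (s j)) (z (s l)).
Proof.
case: n z => [|n] z hc.
  by exists 1%g => -[].
have zinj := cpos_inj hc.
case: (lexmin z) => j0 hj0.
pose o := z j0.
have hH : forall a, a != j0 -> inH (subp (z a) o).
  move=> a ha; have hne : z a != o by apply: contra ha => /eqP /zinj ->.
  move: (hj0 a); rewrite /inH /subp /= !subr_gt0 subr_eq0 => /orP[->//|/andP[/eqP e1 e2]].
  rewrite /o -e1 eqxx ltxx /= lt_neqAle e2 andbT; apply: contra hne => /eqP e3.
  by apply/eqP/pair_eq.
pose bef a b := 0 < orient o (z a) (z b).
have irr a : ~~ bef a a.
  rewrite /bef /orient; have -> : forall x y u v : R, (x - u) * (y - v) - (y - v) * (x - u) = 0.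
    by move=> *; ring.
  by rewrite ltxx.
have trans a b c : a != j0 -> b != j0 -> c != j0 -> bef a b -> bef b c -> bef a c.
  by move=> ha hb hc'; rewrite /bef !orient_cross; apply: trans_H; apply: hH.
have tot a b : a != j0 -> b != j0 -> a != b -> bef a b || bef b a.
  move=> ha hb hab; rewrite /bef (orient_swap o (z b)) oppr_gt0.
  case: (ltrgtP (orient o (z a) (z b)) 0) => // h0; exfalso.
  rewrite orient_cross in h0.
  case: (collin (hH a ha) (hH b hb) h0) => t [t0 t1 [[e1 e2]|[e1 e2]]];
    move: e1 e2; rewrite /subp /= => e1 e2.
  - apply: (hc b); apply: (@conv3 _ _ _ _ j0 a a (1 - t) t 0).
    + by rewrite eq_sym.
    + exact: hab.
    + exact: hab.
    + by rewrite subr_ge0.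
    + exact: ltW.
    + exact: lexx.
    + by ring.
    + have -> : (z b).1 = ((z b).1 - o.1) + o.1 by ring.
      by rewrite e1 /o; ring.
    + have -> : (z b).2 = ((z b).2 - o.2) + o.2 by ring.
      by rewrite e2 /o; ring.
  - apply: (hc a); apply: (@conv3 _ _ _ _ j0 b b (1 - t) t 0).
    + by rewrite eq_sym.
    + by rewrite eq_sym.
    + by rewrite eq_sym.
    + by rewrite subr_ge0.
    + exact: ltW.
    + exact: lexx.
    + by ring.
    + have -> : (z a).1 = ((z a).1 - o.1) + o.1 by ring.
      by rewrite e1 /o; ring.
    + have -> : (z a).2 = ((z a).2 - o.2) + o.2 by ring.
      by rewrite e2 /o; ring.
pose S a := [set b | (b != j0) && bef b a].
have Sprop a : a != j0 -> S a \proper [set~ j0].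
  move=> ha; apply/properP; split.
    by apply/subsetP => b; rewrite inE in_setC1 => /andP[-> _].
  by exists a; rewrite ?in_setC1 // inE (negbTE (irr a)) andbF.
have Slt a b : a != j0 -> b != j0 -> bef a b -> (#|S a| < #|S b|)%N.
  move=> ha hb hab; apply: proper_card; apply/properP; split.
    apply/subsetP => c; rewrite !inE => /andP[hc' hca]; rewrite hc' /=.
    exact: (trans c a b).
  by exists a; rewrite !inE ?ha ?hab // (negbTE (irr a)) andbF.
pose r a := if a == j0 then 0%N else (#|S a|).+1.
have r_lt a : (r a < n.+1)%N.
  rewrite /r; case: eqP => [_|/eqP ha] //.
  by have := proper_card (Sprop a ha); rewrite cardsC1 card_ord.
pose rr a := Ordinal (r_lt a).
have r_bef a b : a != j0 -> b != j0 -> (r a < r b)%N -> bef a b.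
  move=> ha hb; rewrite /r (negbTE ha) (negbTE hb) ltnS => h.
  case: (eqVneq a b) => [e|hab]; first by rewrite e ltnn in h.
  case/orP: (tot a b ha hb hab) => // hba.
  by have := Slt b a hb ha hba; rewrite ltnNge ltnW.
have rinj : injective rr.
  move=> a b /(congr1 val) /=; rewrite /r.
  case: (eqVneq a j0) => [->|ha]; case: (eqVneq b j0) => [->|hb] //.
  move=> /eqP; rewrite eqSS => /eqP e.
  case: (eqVneq a b) => // hab; exfalso.
  case/orP: (tot a b ha hb hab) => h.
    by have := Slt a b ha hb h; rewrite e ltnn.
  by have := Slt b a hb ha h; rewrite e ltnn.
pose s := ((perm rinj)^-1)%g.
have rs i : r (s i) = i.
  by have := congr1 val (permKV (perm rinj) i); rewrite permE.
exists s => i j l hij hjl.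
have hb : s j != j0.
  by apply/eqP => e; move: (rs j); rewrite e /r eqxx => ej; rewrite -ej in hij.
have hcc : s l != j0.
  by apply/eqP => e; move: (rs l); rewrite e /r eqxx => el; rewrite -el in hjl.
have bc : bef (s j) (s l) by apply: r_bef; rewrite ?rs.
case: (eqVneq (s i) j0) => [ea|ha].
  by rewrite ea.
have ab : bef (s i) (s j) by apply: r_bef; rewrite ?rs.
have ac : bef (s i) (s l) by apply: (trans _ (s j)).
rewrite ltNge; apply/negP => hle; apply: (hc (s j)).
have hD : orient o (z (s i)) (z (s l)) != 0 by rewrite gt_eqF.
case: (bary (z (s j)) hD) => s1 e1 e2.
have sinj : injective s := @perm_inj _ s.
rewrite /o in s1 e1 e2.
apply: (@conv3 _ _ _ _ j0 (s i) (s l) _ _ _ (z (s j)) _ _ _ _ _ _ s1 e1 e2).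
- by rewrite eq_sym.
- by rewrite (inj_eq sinj) neq_ltn hij.
- by rewrite (inj_eq sinj) neq_ltn hjl orbT.
- by apply: divr_ge0; [rewrite orient_swap oppr_ge0 | exact: ltW ac].
- by apply: divr_ge0; [rewrite orient_rot; exact: ltW bc | exact: ltW ac].
- by apply: divr_ge0; [exact: ltW ab | exact: ltW ac].
Qed.

End Geo2.


Section Mx.
Variable R : realType.

Definition cv (p : R * R) : 'cV[R]_2 := \col_t (if t == ord0 then p.1 else p.2).
Definition pt (x : 'cV[R]_2) : R * R := (x ord0 ord0, x ord_max ord0).

Lemma pt_cv p : pt (cv p) = p.
Proof. by rewrite /pt !mxE /=; case: p. Qed.

Lemma ord2P (t : 'I_2) : t = ord0 \/ t = ord_max.
Proof. by case: t => [[|[|//]]] ht; [left|right]; apply: val_inj. Qed.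

Lemma mulE m (A : 'M[R]_(m, 2)) (x : 'cV[R]_2) i :
  (A *m x) i ord0 = A i ord0 * x ord0 ord0 + A i ord_max * x ord_max ord0.
Proof.
rewrite mxE big_ord_recl big_ord_recl big_ord0 addr0.
by have -> : lift ord0 (ord0 : 'I_1) = ord_max :> 'I_2 by apply: val_inj.
Qed.

Lemma inconv_convR n (w : 'I_n -> R * R) (P : pred 'I_n) (x : 'cV[R]_2) :
  in_conv_of (fun j => cv (w j)) P x <-> convR w P (pt x).
Proof.
split.
  case=> lam [h0 hs hsum e]; exists lam; split => //.
    by rewrite /pt /= e summxE; apply: eq_bigr => j _; rewrite !mxE.
  by rewrite /pt /= e summxE; apply: eq_bigr => j _; rewrite !mxE.
case=> lam [h0 hs hsum e1 e2]; exists lam; split => //.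
apply/matrixP => t u; rewrite (ord1 u) summxE.
case: (ord2P t) => ->.
  by rewrite /pt /= in e1; rewrite e1; apply: eq_bigr => j _; rewrite !mxE.
by rewrite /pt /= in e2; rewrite e2; apply: eq_bigr => j _; rewrite !mxE.
Qed.

End Mx.

Section Poly.
Variable R : realType.
Variable K : nat.
Hypothesis hK : (2 <= K)%N.
Variable v : 'I_K.+1 -> R * R.
Hypothesis cyc : forall i j l : 'I_K.+1, (i < j)%N -> (j < l)%N -> 0 < orient (v i) (v j) (v l).

Definition nx (i : 'I_K.+1) := ordS i.
Definition f i (y : R * R) := orient (v i) (v (nx i)) y.

Lemma nxE i : (nx i : nat) = if (i == K :> nat) then 0%N else i.+1.
Proof.
rewrite /nx /ordS /=; case: eqP => [->|h]; first by rewrite modnn.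
rewrite modn_small //; have := ltn_ord i; lia.
Qed.

Lemma cyc3 (i j l : 'I_K.+1) : [|| (i < j < l), (j < l < i) | (l < i < j)]%N ->
  0 < orient (v i) (v j) (v l).
Proof.
case/or3P => /andP[h1 h2]; first exact: cyc.
  by rewrite orient_rot; apply: cyc.
by rewrite -orient_rot; apply: cyc.
Qed.

Lemma f_pos i j : j != i -> j != nx i -> 0 < f i (v j).
Proof.
move=> h1 h2; apply: cyc3.
have h1' : (j != i :> nat) by [].
have h2' : (j != nx i :> nat) by [].
have := nxE i; have := ltn_ord i; have := ltn_ord j; move: h1' h2'.
case: ifP => /eqP he; lia.
Qed.

Lemma ordP (i j : 'I_K.+1) : (i : nat) = j -> i = j.
Proof. exact: val_inj. Qed.

Lemma nx_neq i : nx i != i.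
Proof.
apply/negP => /eqP/(congr1 (@nat_of_ord _)); have := nxE i; have := ltn_ord i.
case: ifP => /eqP he; lia.
Qed.

Lemma nxnx_neq i : nx (nx i) != i.
Proof.
apply/negP => /eqP/(congr1 (@nat_of_ord _)); have := nxE (nx i); have := nxE i.
have := ltn_ord i; have := ltn_ord (nx i).
case: ifP => /eqP h1; case: ifP => /eqP h2; lia.
Qed.

Definition prv (i : 'I_K.+1) := ord_pred i.
Lemma nx_prv i : nx (prv i) = i.
Proof. exact: ord_predK. Qed.

Lemma f_self i : f i (v i) = 0.
Proof. rewrite /f /orient; ring. Qed.
Lemma f_nxt i : f i (v (nx i)) = 0.
Proof. rewrite /f /orient; ring. Qed.
Lemma f_ge0 i j : 0 <= f i (v j).
Proof.
case: (eqVneq j i) => [->|h1]; first by rewrite f_self.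
case: (eqVneq j (nx i)) => [->|h2]; first by rewrite f_nxt.
exact: ltW (f_pos h1 h2).
Qed.

Lemma orient_aff (a b y : R * R) :
  orient a b y = (a.2 - b.2) * y.1 + (b.1 - a.1) * y.2 + (a.1 * b.2 - a.2 * b.1).
Proof. rewrite /orient; ring. Qed.

Lemma conv_aff_eq n (z : 'I_n -> R * R) (lam : 'I_n -> R) (y : R * R) :
  \sum_j lam j = 1 -> y.1 = \sum_j lam j * (z j).1 -> y.2 = \sum_j lam j * (z j).2 ->
  forall al be ga : R, al * y.1 + be * y.2 + ga =
     \sum_j lam j * (al * (z j).1 + be * (z j).2 + ga).
Proof.
move=> hs h1 h2 al be ga.
have -> : \sum_j lam j * (al * (z j).1 + be * (z j).2 + ga) =
   al * (\sum_j lam j * (z j).1) + be * (\sum_j lam j * (z j).2) + ga * \sum_j lam j.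
  by rewrite !big_distrr -!big_split /=; apply: eq_bigr => j _; ring.
by rewrite hs mulr1 -h1 -h2.
Qed.

Lemma conv_orient n (z : 'I_n -> R * R) (lam : 'I_n -> R) (y : R * R) :
  \sum_j lam j = 1 -> y.1 = \sum_j lam j * (z j).1 -> y.2 = \sum_j lam j * (z j).2 ->
  forall a b, orient a b y = \sum_j lam j * orient a b (z j).
Proof.
move=> hs h1 h2 a b; rewrite orient_aff (conv_aff_eq hs h1 h2).
by apply: eq_bigr => j _; rewrite orient_aff.
Qed.

Lemma poly_cpos : cpos v.
Proof.
move=> j [lam [h0 hsup hs h1 h2]].
have key : f (prv j) (v j) + f j (v j) =
    \sum_l lam l * (f (prv j) (v l) + f j (v l)).
  rewrite /f !(conv_orient hs h1 h2) -big_split /=.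
  by apply: eq_bigr => l _; rewrite -mulrDr.
have e0 : f (prv j) (v j) = 0 by rewrite -{2}(nx_prv j) f_nxt.
rewrite e0 f_self addr0 in key.
have hall : forall l, 0 <= lam l * (f (prv j) (v l) + f j (v l)).
  by move=> l; apply: mulr_ge0; [exact: h0 | apply: addr_ge0; exact: f_ge0].
have hz := (psumr_eq0P (fun l _ => hall l)) (esym key).
have : \sum_l lam l = 0.
  apply: big1 => l _; case: (eqVneq l j) => [->|hlj]; first by apply: hsup; rewrite eqxx.
  have hpos : 0 < f (prv j) (v l) + f j (v l).
    case: (eqVneq l (nx j)) => [hl|hl2].
      have hp : 0 < f (prv j) (v l).
        apply: f_pos; last by rewrite nx_prv.
        rewrite hl; apply/eqP => e.
        by have := nxnx_neq j; rewrite e nx_prv eqxx.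
      by rewrite ltr_pwDl ?f_ge0.
    by rewrite ltr_wpDl ?f_ge0 // f_pos.
  have := hz l isT; move/eqP; rewrite mulf_eq0 (gt_eqF hpos) orbF => /eqP //.
by rewrite hs; move/eqP; rewrite oner_eq0.
Qed.

Definition a1 i := (v (nx i)).2 - (v i).2.
Definition a2 i := (v i).1 - (v (nx i)).1.
Definition Am : 'M[R]_(K.+1, 2) := \matrix_(i, t) (if t == ord0 then a1 i else a2 i).
Definition Bm : 'cV[R]_K.+1 := \col_i (a1 i * (v i).1 + a2 i * (v i).2).
Definition vv j := cv (v j).

Lemma slackE i x : Bm i ord0 - (Am *m x) i ord0 = f i (pt x).
Proof. rewrite mulE !mxE /= /f /orient /a1 /a2 /pt /=; ring. Qed.

Lemma fan y : (forall i, 0 <= f i y) -> convR v predT y.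
Proof.
move=> hf.
pose P j := (0 < j)%N && (orient (v ord0) (v (inord j.+1)) y <= 0).
have PK : P K.-1.
  rewrite /P; apply/andP; split; first by lia.
  have e : inord (K.-1).+1 = (ord_max : 'I_K.+1).
    by apply: val_inj; rewrite /= inordK; lia.
  have hK0 : nx ord_max = ord0 by apply: ordP; rewrite nxE /= eqxx.
  by rewrite e; have := hf ord_max; rewrite /f hK0 orient_rot orient_swap oppr_ge0.
have exP : exists j, P j by exists K.-1.
case: (ex_minnP exP) => J /andP[J0 hJ] Jmin.
have JK : (J <= K.-1)%N by apply: Jmin.
pose a : 'I_K.+1 := inord J.
pose b : 'I_K.+1 := inord J.+1.
have va : (a : nat) = J by rewrite /a inordK; lia.
have vb : (b : nat) = J.+1 by rewrite /b inordK; lia.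
have nxa : nx a = b.
  apply: ordP; rewrite nxE va vb ifF //; apply/eqP; lia.
have ga : 0 <= orient (v ord0) (v a) y.
  case: (eqVneq J 1) => [J1|J1].
  - have e : nx ord0 = a by apply: ordP; rewrite nxE va /= J1 ifF //; apply/eqP; lia.
    by have := hf ord0; rewrite /f e.
  - have nP : ~~ P J.-1 by apply/negP => /Jmin; lia.
    move: nP; rewrite /P.
    have -> : (0 < J.-1)%N = true by apply/idP; lia.
    have -> : J.-1.+1 = J by lia.
    by rewrite -/a /= -ltNge => h; exact: ltW.
have hD : 0 < orient (v ord0) (v a) (v b) by apply: cyc; rewrite ?va ?vb /=; lia.
case: (bary y (lt0r_neq0 hD)) => s1 e1 e2.
apply: (@conv3 _ _ _ _ ord0 a b _ _ _ y _ _ _ _ _ _ s1 e1 e2) => //.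
- have := hf a; rewrite /f nxa => h; exact: divr_ge0 h (ltW hD).
- apply: divr_ge0 (ltW hD); rewrite orient_rot orient_swap oppr_ge0; exact: hJ.
- exact: divr_ge0 ga (ltW hD).
Qed.

Lemma tightE i : tight_set Am Bm vv i = [set i; nx i].
Proof.
apply/setP => l; rewrite !inE.
have -> : ((Am *m vv l) i 0 == Bm i 0) = (f i (v l) == 0).
  by have := slackE i (vv l); rewrite /vv pt_cv => <-; rewrite subr_eq0 eq_sym.
case: (eqVneq l i) => [->|h1]; first by rewrite f_self eqxx.
case: (eqVneq l (nx i)) => [->|h2]; first by rewrite f_nxt eqxx orbT.
by rewrite gt_eqF ?f_pos.
Qed.

Lemma poly_facet : facet_description Am Bm vv.
Proof.
split.
- move=> x; rewrite inconv_convR; split.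
  + case=> lam [h0 hs hsum e1 e2] i.
    rewrite -subr_ge0 slackE /f (conv_orient hsum e1 e2).
    by apply: sumr_ge0 => l _; apply: mulr_ge0 => //; exact: f_ge0.
  + move=> h; apply: fan => i; rewrite -slackE subr_ge0; exact: h i.
- by move=> i; rewrite tightE cards2 eq_sym nx_neq.
- move=> i i'; rewrite !tightE => e.
  have hi : i \in [set i'; nx i'] by rewrite -e !inE eqxx.
  have hn : nx i \in [set i'; nx i'] by rewrite -e !inE eqxx orbT.
  rewrite !inE in hi hn.
  case/orP: hi => /eqP // hi.
  case/orP: hn => /eqP hn.
    by exfalso; rewrite hi in hn; have := nxnx_neq i'; rewrite hn eqxx.
  exact: ordS_inj hn.
Qed.

Lemma poly_vert : convex_polygon_vertices vv.
Proof.
split; first by lia.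
by move=> j; rewrite inconv_convR /vv pt_cv; exact: poly_cpos j.
Qed.

Lemma slackmxE i l : slack_matrix Am Bm vv i l = f i (v l).
Proof. by rewrite /slack_matrix mxE; have := slackE i (vv l); rewrite /vv pt_cv => <-. Qed.

Lemma farkas (al be ga : R) : (forall l, 0 <= al * (v l).1 + be * (v l).2 + ga) ->
  exists lam : 'I_K.+1 -> R, (forall i, 0 <= lam i) /\
    forall y, al * y.1 + be * y.2 + ga = \sum_i lam i * f i y.
Proof.
move=> hg.
pose g (y : R * R) := al * y.1 + be * y.2 + ga.
have sumf : forall y, \sum_i f i y = \sum_i f i (v ord0).
  have e : forall y, \sum_i f i y =
      \sum_i ((v i).1 * (v (nx i)).2 - (v i).2 * (v (nx i)).1)
      + (\sum_i ((v (nx i)).1 * y.2 - (v (nx i)).2 * y.1)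
         - \sum_i ((v i).1 * y.2 - (v i).2 * y.1)).
    by move=> y; rewrite -sumrB -big_split /=; apply: eq_bigr => i _; rewrite /f /orient; ring.
  have r : forall y, \sum_i ((v (nx i)).1 * y.2 - (v (nx i)).2 * y.1) =
      \sum_i ((v i).1 * y.2 - (v i).2 * y.1).
    by move=> y; rewrite [RHS](reindex_inj (@ordS_inj _)).
  by move=> y; rewrite !e !r !subrr.
pose C := \sum_i f i (v ord0).
case: (@exmin _ _ ord0 predT (fun l => g (v l))) => // q _ hq.
pose p := prv q; pose s := nx q.
have nxp : nx p = q := nx_prv q.
set D := orient (v p) (v q) (v s).
have hD : 0 < D.
  have := @f_pos p s; rewrite /f nxp; apply.
    by have := nxnx_neq p; rewrite nxp.
  exact: nx_neq.
have hC : 0 < C.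
  have hpos : 0 < f s (v q).
    by apply: f_pos; rewrite eq_sym ?nx_neq ?nxnx_neq.
  rewrite /C -(sumf (v q)) (bigD1 s) //=; apply: (lt_le_trans hpos).
  by rewrite lerDl; apply: sumr_ge0 => i _; exact: f_ge0.
exists (fun i => (g (v p) - g (v q)) / D * (i == q)%:R
          + (g (v s) - g (v q)) / D * (i == p)%:R + g (v q) / C).
split.
- move=> i; apply: addr_ge0; first apply: addr_ge0.
  + by apply: mulr_ge0; [apply: divr_ge0; [rewrite subr_ge0; exact: hq|exact: ltW] | exact: ler0n].
  + by apply: mulr_ge0; [apply: divr_ge0; [rewrite subr_ge0; exact: hq|exact: ltW] | exact: ler0n].
  + by apply: divr_ge0; [exact: hg | exact: ltW].
- move=> y.
  have interp : D * (g y - g (v q)) = (g (v p) - g (v q)) * f q y + (g (v s) - g (v q)) * f p y.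
    by rewrite /D /g /f nxp /s /orient; ring.
  rewrite sum3 (sumf y) -/C.
  have e : (g (v p) - g (v q)) / D * f q y + (g (v s) - g (v q)) / D * f p y = g y - g (v q).
    by rewrite -[RHS](mulKf (lt0r_neq0 hD)) interp; ring.
  rewrite e divfK ?lt0r_neq0 //; rewrite /g; ring.
Qed.

End Poly.

Section NR.
Variable R : realType.

Lemma nr_le m n (X : 'M[R]_(m,n)) r : nonneg_fact X r -> (nonneg_rank X <= r)%N.
Proof.
move=> h; rewrite /nonneg_rank; case: pselect => [ex|nex]; last by [].
case: ex_minnP => r0 _; apply; exact/asboolP.
Qed.

Lemma nr_fact m n (X : 'M[R]_(m,n)) : nonneg_mx X -> nonneg_fact X (nonneg_rank X).
Proof.
move=> hX; rewrite /nonneg_rank; case: pselect => [ex|nex].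
  by case: ex_minnP => r0 /asboolP.
exfalso; apply: nex; exists n; exists X, 1%:M; split => //; last by rewrite mulmx1.
by move=> i j; rewrite mxE; case: (i == j).
Qed.

Lemma nr_trivial m n (X : 'M[R]_(m,n)) : nonneg_mx X -> (nonneg_rank X <= n)%N.
Proof.
move=> hX; apply: nr_le; exists X, 1%:M; split => //; last by rewrite mulmx1.
by move=> i j; rewrite mxE; case: (i == j).
Qed.

Lemma nonneg_mul m k n (A : 'M[R]_(m,k)) (B : 'M[R]_(k,n)) :
  nonneg_mx A -> nonneg_mx B -> nonneg_mx (A *m B).
Proof. by move=> hA hB i j; rewrite mxE sumr_ge0 // => l _; rewrite mulr_ge0. Qed.

Lemma nr_mul m k n (X : 'M[R]_(m,k)) (A : 'M[R]_(k,n)) :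
  nonneg_mx X -> nonneg_mx A -> (nonneg_rank (X *m A) <= nonneg_rank X)%N.
Proof.
move=> hX hA; case: (nr_fact hX) => W [H [hW hH eX]].
apply: nr_le; exists W, (H *m A); split => //; first exact: nonneg_mul.
by rewrite {1}eX mulmxA.
Qed.

Lemma nr_mull m k n (A : 'M[R]_(m,k)) (X : 'M[R]_(k,n)) :
  nonneg_mx X -> nonneg_mx A -> (nonneg_rank (A *m X) <= nonneg_rank X)%N.
Proof.
move=> hX hA; case: (nr_fact hX) => W [H [hW hH eX]].
apply: nr_le; exists (A *m W), H; split => //; first exact: nonneg_mul.
by rewrite {1}eX mulmxA.
Qed.

Lemma nr_tr m n (X : 'M[R]_(m,n)) : nonneg_mx X -> (nonneg_rank X <= nonneg_rank X^T)%N.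
Proof.
move=> hX.
have hXT : nonneg_mx X^T by move=> i j; rewrite mxE.
case: (nr_fact hXT) => W [H [hW hH e]].
apply: nr_le; exists H^T, W^T; split.
- by move=> i j; rewrite mxE.
- by move=> i j; rewrite mxE.
by rewrite -trmx_mul -e trmxK.
Qed.

End NR.

Section Final.
Variable R : realType.

Definition Hyp := forall (n m : nat) (v : 'I_n -> 'cV[R]_2) (A : 'M[R]_(m, 2)) (b : 'cV[R]_m),
      (3 <= n)%N -> convex_polygon_vertices v -> facet_description A b v ->
      (nonneg_rank (slack_matrix A b v) <= (n + 6) %/ 2)%N.

Definition RC m n (X : 'M[R]_(m, n)) := exists j (c : 'I_n -> R),
  [/\ forall l, 0 <= c l, c j = 0 & forall i, X i j = \sum_l c l * X i l].

Lemma expand3 (F : 'I_3 -> R) (k : 'I_3) :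
  \sum_t F t = F k + F (lift k ord0) + F (lift k ord_max).
Proof.
rewrite (bigD1_ord k) //= big_ord_recl big_ord1 addrA.
by have -> : lift ord0 (ord0 : 'I_1) = ord_max :> 'I_2 by apply: val_inj.
Qed.

Lemma geo_case (H : Hyp) K m (X : 'M[R]_(m, K.+1)) (U : 'M[R]_(m, 3)) (V : 'M[R]_(3, K.+1)) :
  (2 <= K)%N -> nonneg_mx X -> X = U *m V -> ~ RC X ->
  (nonneg_rank X <= (K.+1 + 6) %/ 2)%N.
Proof.
move=> hK hX eX nRC.
pose s j := \sum_i X i j.
have hs : forall j, 0 < s j.
  move=> j; rewrite lt0r sumr_ge0 ?andbT; last by move=> i _; exact: hX.
  apply/negP => /eqP s0; apply: nRC; exists j, (fun _ => 0); split => // i.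
  rewrite big1 => [|l _]; last by rewrite mul0r.
  exact: (psumr_eq0P (fun i _ => hX i j)) s0 i isT.
pose phi t := \sum_i U i t.
have hphi : forall j, \sum_t phi t * V t j = s j.
  move=> j; rewrite /s /phi; under eq_bigr => t _ do rewrite big_distrl /=.
  by rewrite exchange_big /=; apply: eq_bigr => i _; rewrite eX mxE.
have [kk hkk] : exists kk, phi kk != 0.
  case: (pselect (exists kk, phi kk != 0)) => [//|nex]; exfalso.
  move: (hs ord0); rewrite -hphi big1 ?ltxx // => t _.
  have : ~~ (phi t != 0) by apply/negP => h; apply: nex; exists t.
  by rewrite negbK => /eqP ->; rewrite mul0r.
pose W t j := V t j / s j.
have hW : forall j, \sum_t phi t * W t j = 1.
  move=> j; rewrite /W; under eq_bigr => t _ do rewrite mulrA.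
  by rewrite -big_distrl /= hphi divff // lt0r_neq0.
pose l0 := lift kk ord0; pose l1 := lift kk (ord_max : 'I_2).
pose z j := (W l0 j, W l1 j).
pose al i := U i l0 - U i kk * phi l0 / phi kk.
pose be i := U i l1 - U i kk * phi l1 / phi kk.
pose ga i := U i kk / phi kk.
have hX2 : forall i j, X i j = s j * (al i * (z j).1 + be i * (z j).2 + ga i).
  move=> i j.
  have hsj := lt0r_neq0 (hs j).
  have e1 : X i j = s j * \sum_t U i t * W t j.
    rewrite eX mxE mulr_sumr; apply: eq_bigr => t _; rewrite /W; fld.
  have e2 := hW j; rewrite (expand3 _ kk) in e2.
  have ek : W kk j = (1 - phi l0 * W l0 j - phi l1 * W l1 j) / phi kk.
    by rewrite -e2 -/l0 -/l1; fld.
  by rewrite e1 (expand3 _ kk) ek /al /be /ga /z /= -/l0 -/l1; fld.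
have hcp : cpos z.
  move=> j [lam [h0 hsup hsum e1 e2]]; apply: nRC.
  exists j, (fun l => lam l * s j / s l); split.
  - move=> l; apply: divr_ge0; [apply: mulr_ge0 => //; exact: ltW (hs j) | exact: ltW].
  - by rewrite hsup ?eqxx // !mul0r.
  - move=> i; rewrite hX2 (conv_aff_eq hsum e1 e2) mulr_sumr.
    apply: eq_bigr => l _; rewrite hX2; have hsl := lt0r_neq0 (hs l); fld.
case: (cyclic_order hcp) => sg hsg.
pose v l := z (sg l).
have cycv : forall i j l : 'I_K.+1, (i < j)%N -> (j < l)%N -> 0 < orient (v i) (v j) (v l).
  exact: hsg.
have h3 : (3 <= K.+1)%N by lia.
have hS := H K.+1 K.+1 (vv v) (Am v) (Bm v) h3 (poly_vert hK cycv) (poly_facet hK cycv).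
set S := slack_matrix (Am v) (Bm v) (vv v) in hS.
have hSnn : nonneg_mx S by move=> i l; rewrite /S slackmxE; exact: f_ge0.
have hF : forall i, exists lam : 'I_K.+1 -> R, (forall q, 0 <= lam q) /\
    forall y, al i * y.1 + be i * y.2 + ga i = \sum_q lam q * f v q y.
  move=> i; apply: (farkas hK cycv) => l.
  by rewrite -(pmulr_rge0 _ (hs (sg l))) -hX2; exact: hX.
case: (choice hF) => Lf hLf.
pose Lam : 'M[R]_(m, K.+1) := \matrix_(i, q) Lf i q.
pose Bq : 'M[R]_(K.+1, K.+1) := \matrix_(l, j) ((sg l == j)%:R * s j).
have eX2 : X = Lam *m (S *m Bq).
  apply/matrixP => i j; rewrite mulmxA mxE.
  have hLS : forall l, (Lam *m S) i l = al i * (v l).1 + be i * (v l).2 + ga i.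
    move=> l; rewrite mxE (proj2 (hLf i) (v l)); apply: eq_bigr => q _.
    by rewrite mxE /S slackmxE.
  under eq_bigr => l _ do rewrite hLS mxE.
  set l0' := (sg^-1)%g j.
  have ej : forall l, (sg l == j) = (l == l0').
    by move=> l; rewrite /l0'; apply/eqP/eqP => [<-|->]; rewrite ?permK ?permKV.
  under eq_bigr => l _ do rewrite ej mulrCA.
  by rewrite sum_ind /v /l0' permKV hX2 mulrC.
have hBq : nonneg_mx Bq.
  by move=> l j; rewrite mxE; apply: mulr_ge0; [exact: ler0n | exact: ltW].
have hLam : nonneg_mx Lam by move=> i q; rewrite mxE; exact: (proj1 (hLf i)).
rewrite eX2; apply: leq_trans (nr_mull (nonneg_mul hSnn hBq) hLam) _.
exact: leq_trans (nr_mul hSnn hBq) hS.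
Qed.

Lemma claim (H : Hyp) n : forall m (X : 'M[R]_(m, n)), nonneg_mx X ->
  (exists (U : 'M[R]_(m, 3)) (V : 'M[R]_(3, n)), X = U *m V) ->
  (nonneg_rank X <= (n + 6) %/ 2)%N.
Proof.
elim: n => [|n IH] m X hX [U [V eX]].
  exact: leq_trans (nr_trivial hX) _.
case: (pselect (RC X)) => [[j [c [hc0 hcj hc]]]|nRC].
- pose Sel : 'M[R]_(n.+1, n) := \matrix_(l', l) ((l' == lift j l)%:R).
  pose X' := X *m Sel.
  have X'E : forall i l, X' i l = X i (lift j l).
    move=> i l; rewrite mxE; under eq_bigr => l' _ do rewrite mxE mulrC.
    exact: sum_ind.
  pose B : 'M[R]_(n, n.+1) :=
    \matrix_(l, j') (if j' == j then c (lift j l) else (lift j l == j')%:R).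
  have eXB : X = X' *m B.
    apply/matrixP => i j'; rewrite mxE; under eq_bigr => l _ do rewrite X'E mxE.
    case: (eqVneq j' j) => [->|hj].
    + rewrite hc (bigD1_ord j) //= hcj mul0r add0r.
      by apply: eq_bigr => l _; rewrite mulrC.
    + rewrite -[LHS](sum_ind j' (fun l' => X i l')) (bigD1_ord j) //=.
      rewrite eq_sym (negbTE hj) mul0r add0r.
      by apply: eq_bigr => l _; rewrite mulrC.
  have hX' : nonneg_mx X' by move=> i l; rewrite X'E.
  have hB : nonneg_mx B.
    by move=> l j'; rewrite mxE; case: ifP => _ //; exact: ler0n.
  have eX' : X' = U *m (V *m Sel) by rewrite /X' eX mulmxA.
  have hIH := IH m X' hX' (ex_intro _ U (ex_intro _ (V *m Sel) eX')).
  rewrite eXB; apply: leq_trans (nr_mul hX' hB) _; apply: leq_trans hIH _.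
  by apply: leq_div2r; lia.
- case: (leqP n.+1 6) => hn.
    by apply: leq_trans (nr_trivial hX) _; lia.
  have hK : (2 <= n)%N by lia.
  exact: (@geo_case H n m X U V hK hX eX nRC).
Qed.

End Final.

Theorem mainTheorem1 (R : realType) :
  (forall (n m : nat) (v : 'I_n -> 'cV[R]_2) (A : 'M[R]_(m, 2)) (b : 'cV[R]_m),
      (3 <= n)%N -> convex_polygon_vertices v -> facet_description A b v ->
      (nonneg_rank (slack_matrix A b v) <= (n + 6) %/ 2)%N) ->
  forall (m n : nat) (X : 'M[R]_(m, n)),
    nonneg_mx X -> \rank X = 3%N ->
    (nonneg_rank X <= (minn m n + 6) %/ 2)%N.
Proof.
move=> H m n X hX hr.
have [U [V eX]] : exists (U : 'M[R]_(m, 3)) (V : 'M[R]_(3, n)), X = U *m V.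
  move: (mulmx_base X); move: (col_base X) (row_base X); rewrite hr => U V e.
  by exists U, V.
case: (leqP m n) => hmn.
  have hXT : nonneg_mx X^T by move=> i j; rewrite mxE.
  apply: leq_trans (nr_tr hX) _.
  apply: (claim H hXT); exists V^T, U^T; by rewrite eX trmx_mul.
by apply: (claim H hX); exists U, V.
Qed.
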